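(* Let $\mathcal{G}_1$ and $\mathcal{G}_2$ be reaction networks in $\mathbb{R}^d$. Then $\mathcal{G}_2\sqsubseteq\mathcal{G}_1$ if and only if (i) $\mathcal{SC}_{\mathcal{G}_2}\subset\mathcal{SC}_{\mathcal{G}_1}$, and (ii) for every $\mathbf{s}\in\mathcal{SC}_{\mathcal{G}_1}$, $\mathrm{RelInt}(V^{\mathcal{G}_2}(\mathbf{s}))\subseteq\mathrm{RelInt}(V^{\mathcal{G}_1}(\mathbf{s}))$, where $V^{\mathcal{G}}(\mathbf{s})=\{\mathbf{0}\}$ if $\mathbf{s}\notin\mathcal{SC}_{\mathcal{G}}$.
   Context: A reaction network (E-graph) $\mathcal{G}=(\mathcal{V},\mathcal{E})$ is a finite directed graph whose nodes are distinct elements of a finite set $Y\subset\mathbb{R}^d_{\ge 0}$, with $\mathcal{V}\neq\emptyset$, every node incident to at least one edge, and no edge from a node to itself. For an edge $e$, $\mathbf{s}(e)$ is its source node, $\mathbf{t}(e)$ its target node, and $\mathbf{v}(e)=\mathbf{t}(e)-\mathbf{s}(e)$. Given positive rate constants $\mathcal{K}=(k_e)_{e\in\mathcal{E}}$, $\mathcal{G}$ generates $\mathbf{f}_{\mathcal{G}(\mathcal{K})}(\mathbf{x})=\sum_{e\in\mathcal{E}}k_e\mathbf{x}^{\mathbf{s}(e)}\mathbf{v}(e)$, with $\mathbf{x}^{\mathbf{y}}=\prod_i x_i^{y_i}$, $0^0=1$. We write $\mathcal{G}_2\sqsubseteq\mathcal{G}_1$ if for every choice of positive rate constants $\mathcal{K}_2$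 for $\mathcal{G}_2$ there exist positive rate constants $\mathcal{K}_1$ for $\mathcal{G}_1$ with $\mathbf{f}_{\mathcal{G}_1(\mathcal{K}_1)}(\mathbf{x})=\mathbf{f}_{\mathcal{G}_2(\mathcal{K}_2)}(\mathbf{x})$ for all $\mathbf{x}$. $\mathcal{SC}_{\mathcal{G}}=\{\mathbf{s}(e):e\in\mathcal{E}\}$ is the set of source complexes. For $\mathbf{s}\in\mathcal{SC}_{\mathcal{G}}$, $V^{\mathcal{G}}(\mathbf{s})$ is the cone (set of all nonnegative linear combinations) generated by $\{\mathbf{v}(e):e\in\mathcal{E},\mathbf{s}(e)=\mathbf{s}\}$. $\mathrm{RelInt}(K)$ denotes the interior of a cone $K$ relative to its linear span. *)

(* Defs.v *)
From HB Require Import structures.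
From mathcomp Require Import all_boot all_order all_algebra.
From mathcomp Require Import all_classical all_reals all_analysis.
Set Implicit Arguments. Unset Strict Implicit. Unset Printing Implicit Defensive.
Import Order.TTheory GRing.Theory Num.Theory.
Local Open Scope classical_set_scope.
Local Open Scope ring_scope.

Section EGraph.
Variables (R : realType) (d : nat).

Notation vec := 'rV[R]_d.

(* An E-graph is given by its (finite, duplicate-free) list of edges (source, target).
   Its node set is the set of endpoints of the edges, so every node is incident
   to an edge; V nonempty <-> E nonempty. *)
Definition is_egraph (E : seq (vec * vec)) : Prop :=
  [/\ uniq E, E != [::],
      (forall e, e \in E -> e.1 != e.2) &
      (forall e, e \in E -> forall i : 'I_d, 0 <= e.1 ord0 i /\ 0 <= e.2 ord0 i)].

(* monomial x^y = prod_i x_i^{y_i}  (powR has 0^0 = 1) *)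
Definition monomial (x y : vec) : R := \prod_(i < d) powR (x ord0 i) (y ord0 i).

Definition flux (E : seq (vec * vec)) (k : vec * vec -> R) (x : vec) : vec :=
  \sum_(e <- E) (k e * monomial x e.1) *: (e.2 - e.1).

Definition positive_rates (E : seq (vec * vec)) (k : vec * vec -> R) : Prop :=
  forall e, e \in E -> 0 < k e.

(* G2 ⊑ G1 : every dynamical system generated by G2 is generated by G1
   (equality of vector fields on the positive orthant). *)
Definition realizes (E1 E2 : seq (vec * vec)) : Prop :=
  forall k2, positive_rates E2 k2 ->
    exists k1, positive_rates E1 k1 /\
      forall x : vec, (forall i, 0 < x ord0 i) -> flux E1 k1 x = flux E2 k2 x.

Definition source_complexes (E : seq (vec * vec)) : set vec :=
  [set s | s \in [seq e.1 | e <- E]].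

(* V^G(s): cone generated by the reaction vectors with source s
   (= {0} when s is not a source complex) *)
Definition cone_at (E : seq (vec * vec)) (s : vec) : set vec :=
  [set v | exists c : vec * vec -> R, (forall e, 0 <= c e) /\
     v = \sum_(e <- E | e.1 == s) c e *: (e.2 - e.1)].

Definition linspan (S : set vec) : set vec :=
  [set w | exists (n : nat) (a : 'I_n -> R) (u : 'I_n -> vec),
     (forall i, S (u i)) /\ w = \sum_(i < n) a i *: u i].

Definition relint (K : set vec) : set vec :=
  [set v | K v /\ exists2 eps : R, 0 < eps &
     forall w, linspan K w -> (forall i, `|w ord0 i - v ord0 i| < eps) -> K w].

End EGraph.

(* Main.v *)
Require Import Defs.
From HB Require Import structures.
From mathcomp Require Import all_boot all_order all_algebra.
From mathcomp Require Import all_classical all_reals all_analysis.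
From mathcomp Require Import ring lra.
Import Order.TTheory GRing.Theory Num.Theory.
Local Open Scope classical_set_scope.
Local Open Scope ring_scope.

Lemma big_seq_pred1 (T : eqType) (V : nmodType) (F : T -> V) (S : seq T) x :
  uniq S -> x \in S -> \sum_(s <- S | x == s) F s = F x.
Proof.
move=> uS xS; rewrite (big_rem x) //= eqxx big1_seq ?addr0 // => s /andP[/eqP <-].
by rewrite mem_rem_uniqF.
Qed.

Lemma bigmin_le_R (R : realType) m (f : 'I_m -> R) i :
  \big[Order.min/1]_(j < m) f j <= f i.
Proof. exact: bigmin_le. Qed.

Lemma pos_lb (R : realType) m (f : 'I_m -> R) :
  (forall i, 0 < f i) -> exists2 mu, 0 < mu & forall i, mu <= f i.
Proof.
move=> H; exists (\big[Order.min/1]_(j < m) f j); last exact: bigmin_le_R.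
by apply: lt_bigmin => // i _.
Qed.

Section Main.
Variables (R : realType) (d : nat).
Notation vec := 'rV[R]_d.

Definition net (E : seq (vec * vec)) (k : vec * vec -> R) (s : vec) : vec :=
  \sum_(e <- E | e.1 == s) k e *: (e.2 - e.1).

Lemma flux_group E k x S : uniq S -> {subset [seq e.1 | e <- E] <= S} ->
  flux E k x = \sum_(s <- S) monomial x s *: net E k s.
Proof.
move=> uS sub; rewrite /flux /net.
under [RHS]eq_bigr do rewrite scaler_sumr.
rewrite (exchange_big_dep xpredT) //=.
apply: eq_big_seq => e eE.
rewrite (@big_seq_pred1 _ _ (fun s => monomial x s *: (k e *: (e.2 - e.1)))) //.
  by rewrite scalerA mulrC.
by apply: sub; apply/mapP; exists e.
Qed.

Definition dot (y z : vec) : R := \sum_i y ord0 i * z ord0 i.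

Lemma monomial_exp (z y : vec) :
  monomial (\row_i expR (z ord0 i)) y = expR (dot y z).
Proof.
rewrite /monomial /dot (big_morph _ (@expRD R) (@expR0 R)).
by apply: eq_bigr => i _; rewrite mxE -expRM mulrC.
Qed.

Lemma dotD (y z h : vec) : dot y (z + h) = dot y z + dot y h.
Proof. by rewrite /dot -big_split; apply: eq_bigr => i _; rewrite mxE mulrDr. Qed.

Lemma indep_scalar (S : seq vec) : uniq S -> forall (a : vec -> R),
  (forall z, \sum_(y <- S) a y * expR (dot y z) = 0) ->
  forall y, y \in S -> a y = 0.
Proof.
elim: S => [|y0 S IH] //= /andP[y0S uS] a H.
have Ha : forall y, y \in S -> a y = 0.
  move=> y yS.
  have ny : y != y0 by apply: contraNneq y0S => <-.
  have [i Hi] : exists i, y ord0 i != y0 ord0 i.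
    apply/existsP; apply: contraR ny => /existsPn Hn.
    by apply/eqP/rowP => j; apply/eqP; move: (Hn j); rewrite negbK.
  pose h : vec := \row_j (if j == i then 1 else 0).
  have dh w : dot w h = w ord0 i.
    rewrite /dot (bigD1 i) //= big1 ?addr0 ?mxE ?eqxx ?mulr1 //.
    by move=> j /negbTE ji; rewrite mxE ji mulr0.
  pose a' w := a w * (expR (dot w h) - expR (dot y0 h)).
  have H' : forall z, \sum_(w <- S) a' w * expR (dot w z) = 0.
    move=> z; have := H (z + h); have := H z; rewrite !big_cons.
    move=> /eqP; rewrite addrC addr_eq0 => /eqP H1.
    move=> /eqP; rewrite addrC addr_eq0 => /eqP H2.
    rewrite /a'.
    have -> : \sum_(w <- S) a w * (expR (dot w h) - expR (dot y0 h)) * expR (dot w z)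
      = \sum_(w <- S) a w * expR (dot w (z + h)) - expR (dot y0 h) * \sum_(w <- S) a w * expR (dot w z).
      rewrite mulr_sumr -sumrB; apply: eq_bigr => w _.
      by rewrite dotD expRD; ring.
    rewrite H1 H2 dotD expRD; ring.
  have := IH uS a' H' y yS; rewrite /a' => /eqP; rewrite mulf_eq0 => /orP[/eqP //|].
  rewrite subr_eq0 => /eqP /expR_inj; rewrite !dh => /eqP; by rewrite (negbTE Hi).
have H0 := H 0; rewrite big_cons big1_seq ?addr0 in H0; last first.
  by move=> w /andP[_ wS]; rewrite Ha ?mul0r.
move=> y; rewrite inE => /orP[/eqP ->|]; last exact: Ha.
by move/eqP: H0; rewrite mulf_eq0 => /orP[/eqP //|]; rewrite gt_eqF ?expR_gt0.
Qed.

Lemma net0 E k s : s \notin [seq e.1 | e <- E] -> net E k s = 0.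
Proof.
move=> sE; rewrite /net big1_seq // => e /andP[/eqP es eE].
by move: sE; rewrite -es map_f.
Qed.

Lemma realizes_net (E1 E2 : seq (vec * vec)) : realizes E1 E2 <->
  forall k2, positive_rates E2 k2 -> exists k1, positive_rates E1 k1 /\
    forall s, net E1 k1 s = net E2 k2 s.
Proof.
pose S := undup [seq e.1 | e <- E1 ++ E2].
have uS : uniq S by exact: undup_uniq.
have sub1 : {subset [seq e.1 | e <- E1] <= S}.
  by move=> s; rewrite mem_undup map_cat mem_cat => ->.
have sub2 : {subset [seq e.1 | e <- E2] <= S}.
  by move=> s; rewrite mem_undup map_cat mem_cat orbC => ->.
split => H k2 k2p; have [k1 [k1p Hk]] := H k2 k2p; exists k1; split => //.
  move=> s.
  have [sS|sS] := boolP (s \in S); last first.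
    rewrite !net0 //; apply: contra sS; [exact: sub2|exact: sub1].
  apply/rowP => j; apply/eqP; rewrite -subr_eq0.
  have -> : net E1 k1 s ord0 j - net E2 k2 s ord0 j = (net E1 k1 s - net E2 k2 s) ord0 j by rewrite !mxE.
  apply/eqP.
  apply: (@indep_scalar S uS (fun s => (net E1 k1 s - net E2 k2 s) ord0 j) _ s sS).
  move=> z.
  have xp : forall i, 0 < (\row_i expR (z ord0 i) : vec) ord0 i.
    by move=> i; rewrite mxE expR_gt0.
  have := Hk _ xp; rewrite (flux_group _ _ _ _ uS sub1) (flux_group _ _ _ _ uS sub2).
  move/eqP; rewrite -subr_eq0 -sumrB => /eqP /(congr1 (fun M : vec => M ord0 j)).
  rewrite summxE mxE => H0; rewrite -[RHS]H0; apply: eq_bigr => t _.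
  by rewrite monomial_exp -scalerBr [RHS]mxE mulrC.
move=> x _; rewrite (flux_group _ _ _ _ uS sub1) (flux_group _ _ _ _ uS sub2).
by apply: eq_bigr => s _; rewrite Hk.
Qed.

Lemma netD (E : seq (vec * vec)) (c1 c2 : vec * vec -> R) s :
  net E (fun e => c1 e + c2 e) s = net E c1 s + net E c2 s.
Proof. by rewrite /net -big_split; apply: eq_bigr => e _; rewrite scalerDl. Qed.

Lemma netZ (E : seq (vec * vec)) (c : vec * vec -> R) a s :
  net E (fun e => a * c e) s = a *: net E c s.
Proof. by rewrite /net scaler_sumr; apply: eq_bigr => e _; rewrite scalerA. Qed.

Lemma net_ext (E : seq (vec * vec)) (c1 c2 : vec * vec -> R) s :
  (forall e, e \in E -> c1 e = c2 e) -> net E c1 s = net E c2 s.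
Proof.
by move=> H; rewrite /net (big_seq_cond (fun e => e.1 == s)) [RHS](big_seq_cond (fun e => e.1 == s)); apply: eq_bigr => e /andP[eE _]; rewrite H.
Qed.


Lemma relint_pos (E : seq (vec * vec)) (s v : vec) : relint (cone_at E s) v ->
  exists c, positive_rates E c /\ v = net E c s.
Proof.
move=> [Kv [eps eps0 Heps]].
pose g := net E (fun _ => 1) s.
pose Sg := \sum_j `|g ord0 j|.
have Sg0 : 0 <= Sg by apply: sumr_ge0 => j _.
pose t := eps / (1 + Sg).
have t0 : 0 < t by rewrite divr_gt0 // ltr_pwDl.
pose w := v + (- t) *: g.
have Kg : cone_at E s g by exists (fun _ => 1); split => // e; exact: ler01.
have [c' [c'0 wE]] : cone_at E s w.
  apply: Heps.
    exists 2, (fun i : 'I_2 => if i == ord0 then 1 else - t),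
      (fun i : 'I_2 => if i == ord0 then v else g); split.
      by move=> i; case: ifP.
    by rewrite !big_ord_recl big_ord0 /= addr0 scale1r.
  move=> j; rewrite /w !mxE addrAC subrr add0r normrM normrN (gtr0_norm t0).
  have : `|g ord0 j| <= Sg.
    by rewrite /Sg (bigD1 j) //= lerDl; apply: sumr_ge0.
  move=> gS; have teq : t * (1 + Sg) = eps by rewrite /t divfK // gt_eqF // ltr_pwDl.
  move: teq gS t0; clearbody t Sg; move=> teq gS t0; nra.
exists (fun e => c' e + t); split.
  by move=> e _; rewrite ltr_wpDl.
rewrite netD (_ : net E c' s = w); last by rewrite wE.
rewrite /w.
have -> : net E (fun _ => t) s = t *: g by rewrite -netZ; apply: net_ext => e _; rewrite mulr1.
by rewrite scaleNr addrNK.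
Qed.

Lemma span_net (E : seq (vec * vec)) s w :
  linspan (cone_at E s) w -> exists b, w = net E b s.
Proof.
move=> [n [a [u [Hu ->]]]].
have : forall i, exists c, u i = net E c s by move=> i; have [c [_ ->]] := Hu i; exists c.
move/choice => [f Hf].
exists (fun e => \sum_i a i * f i e).
under eq_bigr => i _ do rewrite Hf /net scaler_sumr.
rewrite /net; under [RHS]eq_bigr => e _ do rewrite scaler_suml.
rewrite [RHS]exchange_big; apply: eq_bigr => i _; apply: eq_bigr => e _.
by rewrite scalerA.
Qed.

Lemma pos_relint (E : seq (vec * vec)) s c : uniq E -> positive_rates E c ->
  relint (cone_at E s) (net E c s).
Proof.
move=> uE cp; split.
  exists (fun e => `|c e|); split => [e|]; first exact: normr_ge0.
  by apply: net_ext => e eE; rewrite gtr0_norm ?cp.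
pose L := [seq e <- E | e.1 == s].
have uL : uniq L by exact: filter_uniq.
pose m := size L.
pose e0 : vec * vec := (0, 0).
pose gi (i : 'I_m) : vec := (nth e0 L i).2 - (nth e0 L i).1.
have Lpos : forall i : 'I_m, 0 < c (nth e0 L i).
  move=> i; apply: cp; have : nth e0 L i \in L by exact: mem_nth.
  by rewrite mem_filter => /andP[].
have netN : forall b, net E b s = \sum_(i < m) b (nth e0 L i) *: gi i.
  by move=> b; rewrite /net -big_filter (big_nth e0) big_mkord.
pose G : 'M[R]_(m, d) := \matrix_(i, j) gi i ord0 j.
have rowG : forall r : 'rV_m, r *m G = \sum_i r ord0 i *: gi i.
  move=> r; rewrite mulmx_sum_row; apply: eq_bigr => i _; congr (_ *: _).
  by apply/rowP => j; rewrite !mxE.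
pose P := pinvmx G.
pose C := \sum_(j < d) \sum_(i < m) `|P j i|.
have C0 : 0 <= C by apply: sumr_ge0 => j _; apply: sumr_ge0.
have [mu mu0 muc] := pos_lb _ _ _ Lpos.
pose k := mu / (1 + C).
have k0 : 0 < k by rewrite divr_gt0 // ltr_pwDl.
have keq : k * (1 + C) = mu by rewrite /k divfK // gt_eqF // ltr_pwDl.
exists k => // w /span_net [b ->] Hclose.
pose u : vec := net E b s - net E c s.
have uj : forall j, u ord0 j = net E b s ord0 j - net E c s ord0 j by move=> j; rewrite !mxE.
have uG : (u <= G)%MS.
  have -> : u = (\row_i (b (nth e0 L i) - c (nth e0 L i))) *m G.
    rewrite rowG /u !netN -sumrB; apply: eq_bigr => i _; by rewrite mxE scalerBl.
  exact: submxMl.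
pose beta := u *m P.
have hb : beta *m G = u := mulmxKpV uG.
have bbound : forall i, `|beta ord0 i| <= mu.
  move=> i; rewrite /beta mxE.
  apply: le_trans (ler_norm_sum _ _ _) _.
  apply: (@le_trans _ _ (\sum_j k * `|P j i|)).
    apply: ler_sum => j _; rewrite normrM; apply: ler_wpM2r => //.
    by rewrite uj; apply: ltW.
  rewrite -mulr_sumr.
  have XC : \sum_j `|P j i| <= C.
    by apply: ler_sum => j _; rewrite (bigD1 i) //= lerDl; apply: sumr_ge0.
  have X0 : 0 <= \sum_j `|P j i| by apply: sumr_ge0.
  move: XC X0; set X := \sum_j `|P j i|; clearbody X; move: keq k0 C0; clearbody k C.
  move=> keq k0 C0 XC X0; nra.
exists (fun e => `|c e + \sum_(i < m | nth e0 L i == e) beta ord0 i|); split.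
  by move=> e; exact: normr_ge0.
have -> : net E b s = net E c s + u by rewrite /u addrC subrK.
rewrite -hb rowG.
have -> : \sum_(e <- E | e.1 == s)
   `|c e + \sum_(i < m | nth e0 L i == e) beta ord0 i| *: (e.2 - e.1) =
   net E (fun e => `|c e + \sum_(i < m | nth e0 L i == e) beta ord0 i|) s by [].
rewrite !netN -big_split; apply: eq_bigr => i _.
apply: (@etrans _ _ ((c (nth e0 L i) + beta ord0 i) *: gi i)); first by rewrite scalerDl.
congr (_ *: _).
rewrite (eq_bigl (fun j => j == i)); last first.
  by move=> j; rewrite /= nth_uniq.
rewrite big_pred1_eq ger0_norm //.
have h1 := muc i; have h2 := lerNnormlW (bbound i); lra.
Qed.
End Main.
Arguments net {R d}.
Arguments netD {R d}.
Arguments net0 {R d}.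
Arguments realizes_net {R d}.
Arguments relint_pos {R d}.
Arguments pos_relint {R d}.

Theorem theorem2 (R : realType) (d : nat) (E1 E2 : seq ('rV[R]_d * 'rV[R]_d)) :
  is_egraph E1 -> is_egraph E2 ->
  (realizes E1 E2 <->
   (source_complexes E2 `<=` source_complexes E1 /\
    forall s, source_complexes E1 s ->
      relint (cone_at E2 s) `<=` relint (cone_at E1 s))).
Proof.
move=> [uE1 _ _ _] [uE2 _ neq2 _]; rewrite realizes_net; split.
  move=> H; split.
    move=> s /= sE2; apply: contraT => sE1.
    have [e0 e0E2 e0s] := mapP sE2.
    have p1 : positive_rates E2 (fun _ => 1) by move=> e _; exact: ltr01.
    have p2 : positive_rates E2 (fun e => 1 + (e == e0)%:R).
      by move=> e _; rewrite ltr_pwDl ?ler0n.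
    have [k1 [_ Hk1]] := H _ p1; have [k1' [_ Hk1']] := H _ p2.
    have : net E2 (fun e => 1 + (e == e0)%:R) s - net E2 (fun _ => 1) s = 0.
      by rewrite -Hk1 -Hk1' !net0 ?subr0.
    rewrite netD addrAC subrr add0r /net (big_rem e0) //= -e0s eqxx eqxx scale1r.
    rewrite big1_seq ?addr0.
      move/eqP; rewrite subr_eq0 => /eqP h; move: (neq2 _ e0E2).
      by rewrite h e0s eqxx.
    move=> e /andP[_]; rewrite (mem_rem_uniq _ uE2) inE => /andP[ne _].
    by rewrite (negbTE ne) scale0r.
  move=> s _ v /relint_pos [c [cp ->]].
  have [k1 [k1p Hk]] := H c cp.
  by rewrite -Hk; apply: pos_relint.
move=> [sub Hrel] k2 k2p.
have : forall s, exists c, positive_rates E1 c /\ net E1 c s = net E2 k2 s.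
  move=> s; have [sE1|sE1] := boolP (s \in [seq e.1 | e <- E1]).
    have := Hrel s sE1 _ (pos_relint E2 s k2 uE2 k2p).
    by move=> /relint_pos [c [cp ->]]; exists c.
  exists (fun _ => 1); split; first by move=> e _; exact: ltr01.
  rewrite !net0 //; apply: contra sE1; exact: sub.
move/choice => [f Hf].
exists (fun e => f e.1 e); split.
  by move=> e eE; have [fp _] := Hf e.1; exact: fp.
move=> s; have [_ <-] := Hf s.
by rewrite /net; apply: eq_bigr => e /eqP ->.
Qed.
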